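(* For $R>1$ let $s(R)>0$ be the unique positive number with $g_R(s(R))=s(R)$. Then $R\mapsto s(R)$ is strictly decreasing on $(1,\infty)$, and $$\lim_{R\to1^+}s(R)=\infty,\qquad\lim_{R\to\infty}s(R)=0.$$
   Context: For $R>1$, $g_R$ is the unique solution on $[0,\infty)$ of the initial value problem $$y'(w)=\frac{\arccos\!\big(\frac{w}{Ry}\big)-\arccos\!\big(\frac{w}{y}\big)\mathbf 1_{\{|w|\le|y|\}}}{R\sqrt{1-\big(\frac{w}{Ry}\big)^2}-\sqrt{1-\big(\frac{w}{y}\big)^2}\,\mathbf 1_{\{|w|\le|y|\}}},\qquad y(0)=\frac{\pi}{R-1}.$$ The function $w\mapsto w/g_R(w)$ is strictly increasing on $(0,\infty)$ with limit $0$ at $0$ and limit $R$ at $\infty$, so $s(R)$ (the unique $w>0$ with $w/g_R(w)=1$) is well defined. *)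

(* Defs.v *)
From Stdlib Require Import Reals Lra.
Open Scope R_scope.

Definition ode_rhs (Rr w y : R) : R :=
  let ind := if Rle_dec (Rabs w) (Rabs y) then 1 else 0 in
  (acos (w / (Rr * y)) - acos (w / y) * ind) /
  (Rr * sqrt (1 - (w / (Rr * y)) ^ 2) - sqrt (1 - (w / y) ^ 2) * ind).

Definition is_gR (Rr : R) (g : R -> R) : Prop :=
  g 0 = PI / (Rr - 1) /\
  (forall eps, 0 < eps -> exists delta, 0 < delta /\
     forall h, 0 < h < delta ->
       Rabs ((g h - g 0) / h - ode_rhs Rr 0 (g 0)) < eps) /\
  (forall w, 0 < w -> derivable_pt_lim g w (ode_rhs Rr w (g w))).

(* Main.v *)
Require Import Defs.
From Stdlib Require Import Reals Lra Psatz.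
From Coquelicot Require Import Coquelicot.
Open Scope R_scope.

Lemma sin_third u : 0 <= u <= 2 -> u/3 <= sin u.
Proof. intros H. destruct (pre_sin_bound u 0) as [H1 _]; try lra.
 unfold sin_approx, sin_term in H1. simpl in H1. nra.
Qed.

Definition K (al be : R) := (be - al) * cos be / sin (be - al).

Lemma trig_pos x : 0 < x < PI/2 -> 0 < sin x /\ 0 < cos x.
Proof. intros H. pose proof PI2_Rlt_PI. split.
 apply sin_gt_0; lra. apply cos_gt_0; lra. Qed.

Lemma K_pos al be : 0 <= al < be -> be < PI/2 -> 0 < K al be.
Proof. intros H1 H2. unfold K. destruct (trig_pos be) as [_ Hc]. lra.
 destruct (trig_pos (be-al)) as [Hs _]. lra.
 apply Rdiv_lt_0_compat; try nra. Qed.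

Lemma K_le al be : 0 <= al < be -> be < PI/2 -> K al be <= 3 * cos be.
Proof. intros H1 H2. unfold K. destruct (trig_pos be) as [_ Hc]. lra.
 destruct (trig_pos (be-al)) as [Hs _]. lra. pose proof PI_4.
 pose proof (sin_third (be - al)) as H3.
 apply Rle_div_l; auto. nra. Qed.

Lemma xcos_lt_sin b : 0 < b < PI/2 -> b * cos b < sin b.
Proof. intros Hb.
 destruct (MVT_cor2 (fun x => sin x - x * cos x) (fun x => x * sin x) 0 b) as [c [Hc1 Hc2]].
 lra.
 intros c _. apply is_derive_Reals. auto_derive; auto. ring.
 rewrite sin_0, cos_0 in Hc1. destruct (trig_pos c) as [Hs _]. lra.
 assert (0 < c * sin c * (b - 0)) by (apply Rmult_lt_0_compat; nra). lra. Qed.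

Lemma K0_lt1 be : 0 < be < PI/2 -> K 0 be < 1.
Proof. intros H. unfold K. rewrite Rminus_0_r.
 destruct (trig_pos be) as [Hs _]; auto. apply Rlt_div_l; auto.
 pose proof (xcos_lt_sin be H). lra. Qed.

Lemma K_decr al b1 b2 : 0 <= al < b1 -> b1 < b2 -> b2 < PI/2 -> K al b2 < K al b1.
Proof. intros H1 H2 H3.
 destruct (MVT_cor2 (K al)
   (fun c => ((cos c - (c-al) * sin c) * sin (c-al) - (c-al) * cos c * cos (c-al)) / (sin (c-al))^2) b1 b2)
   as [c [Hc1 Hc2]]; auto.
 { intros c Hc. destruct (trig_pos (c-al)) as [Hs _]. lra.
   apply is_derive_Reals. unfold K. auto_derive; replace (c + - al) with (c - al) by ring. lra. field. lra. }
 destruct (trig_pos (c-al)) as [Hs Hcu]. lra.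
 destruct (trig_pos c) as [Hsc Hcc]. lra.
 assert (Hsa : 0 <= sin al). { apply sin_ge_0; pose proof PI2_Rlt_PI; lra. }
 assert (Hm : sin c * cos (c - al) - cos c * sin (c - al) >= 0).
 { rewrite <- sin_minus. replace (c - (c - al)) with al by ring. lra. }
 assert (Hx : sin (c-al) * cos (c-al) < c - al).
 { pose proof (sin_lt_x (2 * (c-al))) as Hl. rewrite sin_2a in Hl. lra. }
 set (u := c - al) in *. assert (Hu : 0 < u) by (unfold u; lra).
 assert (N : (cos c - u * sin c) * sin u - u * cos c * cos u < 0).
 { assert (((cos c - u * sin c) * sin u - u * cos c * cos u) * cos u
     <= cos c * (sin u * cos u - u)).
   { pose proof (sin2_cos2 u) as E. unfold Rsqr in E.
     assert (u * sin u * (sin c * cos u - cos c * sin u) >= 0).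
     { apply Rle_ge. apply Rmult_le_pos; try lra. apply Rmult_le_pos; lra. }
     assert (E2 : u * cos c * (sin u * sin u + cos u * cos u) = u * cos c) by (rewrite E; ring).
     lra. }
   assert (cos c * (sin u * cos u - u) < 0) by nra. nra. }
 assert (((cos c - u * sin c) * sin u - u * cos c * cos u) / sin u ^ 2 < 0).
 { apply Rdiv_neg_pos; auto. nra. }
 assert (0 < b2 - b1) by lra. nra. Qed.

Definition Fr (Rr a : R) :=
  (acos (a / Rr) - acos a) / (Rr * sqrt (1 - (a / Rr) ^ 2) - sqrt (1 - a ^ 2)).

Lemma acos_facts Rr a : 1 < Rr -> 0 < a <= 1 ->
  0 <= acos a < acos (a/Rr) /\ acos (a/Rr) < PI/2 /\ cos (acos (a/Rr)) = a/Rr.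
Proof. intros HR Ha.
 assert (H1 : 0 < a / Rr < a).
 { split. apply Rdiv_lt_0_compat; lra. apply Rlt_div_l; nra. }
 pose proof (acos_bound a). pose proof (acos_bound (a/Rr)).
 pose proof (cos_acos a ltac:(lra)). pose proof (cos_acos (a/Rr) ltac:(lra)).
 pose proof PI2_Rlt_PI. pose proof PI2_RGT_0.
 split; [split|split]; try lra.
 - apply cos_decreasing_0; lra.
 - apply cos_decreasing_0; try lra. rewrite cos_PI2. lra.
Qed.

Lemma Fr_K Rr a : 1 < Rr -> 0 < a <= 1 -> Fr Rr a = K (acos a) (acos (a/Rr)).
Proof. intros HR Ha. destruct (acos_facts Rr a HR Ha) as [[H0 H1] [H2 H3]].
 assert (H4 : 0 < a / Rr < a).
 { split. apply Rdiv_lt_0_compat; lra. apply Rlt_div_l; nra. }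
 unfold Fr, K.
 set (al := acos a) in *. set (be := acos (a/Rr)) in *.
 assert (Ea : sqrt (1 - a^2) = sin al).
 { unfold al. rewrite sin_acos by lra. unfold Rsqr. f_equal; ring. }
 assert (Eb : sqrt (1 - (a/Rr)^2) = sin be).
 { unfold be. rewrite sin_acos by lra. unfold Rsqr. f_equal; ring. }
 assert (Eca : cos al = a) by (unfold al; apply cos_acos; lra).
 rewrite Ea, Eb.
 destruct (trig_pos be) as [_ Hcb]. lra.
 destruct (trig_pos (be - al)) as [Hs _]. lra.
 assert (ER : Rr = cos al / cos be) by (rewrite Eca, H3; field; lra).
 assert (Rr * sin be - sin al = sin (be - al) / cos be).
 { rewrite sin_minus, ER. field. lra. }
 rewrite H. field. lra.
Qed.

Lemma Fr_pos Rr a : 1 < Rr -> 0 < a <= 1 -> 0 < Fr Rr a.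
Proof. intros. rewrite Fr_K by auto. destruct (acos_facts Rr a) as [? [? ?]]; auto.
 apply K_pos; lra. Qed.

Lemma Fr_le Rr a : 1 < Rr -> 0 < a <= 1 -> Fr Rr a <= 3 / Rr.
Proof. intros. rewrite Fr_K by auto. destruct (acos_facts Rr a) as [? [? E]]; auto.
 eapply Rle_trans. apply K_le; lra. rewrite E.
 assert (a / Rr <= 1 / Rr). { unfold Rdiv. apply Rmult_le_compat_r.
 left; apply Rinv_0_lt_compat; lra. lra. }
 replace (3 / Rr) with (3 * (1 / Rr)) by (field; lra). lra. Qed.

Lemma Fr1_lt1 Rr : 1 < Rr -> Fr Rr 1 < 1.
Proof. intros. rewrite Fr_K by lra. destruct (acos_facts Rr 1) as [? [? E]]; try lra.
 rewrite acos_1 in *. apply K0_lt1. lra. Qed.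

Lemma Fr_decr R1 R2 a : 1 < R1 -> R1 < R2 -> 0 < a <= 1 -> Fr R2 a < Fr R1 a.
Proof. intros. rewrite !Fr_K by lra.
 destruct (acos_facts R1 a) as [? [? E1]]; try lra.
 destruct (acos_facts R2 a) as [? [? E2]]; try lra.
 apply K_decr; try lra.
 pose proof (acos_bound (a/R1)). pose proof (acos_bound (a/R2)).
 apply cos_decreasing_0; try lra. rewrite E1, E2.
 unfold Rdiv. apply Rmult_lt_compat_l. lra. apply Rinv_lt_contravar; nra. Qed.

Definition ctn (f : R -> R) t := forall e, 0 < e -> exists d, 0 < d /\
  forall x, Rabs (x - t) < d -> Rabs (f x - f t) < e.

Lemma deriv_ctn f t l : derivable_pt_lim f t l -> ctn f t.
Proof. intros H e He.
 destruct (H 1 Rlt_0_1) as [[d Hd] Hd2]. simpl in Hd2.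
 exists (Rmin d (e / (Rabs l + 1))). split.
 { apply Rmin_pos; auto. apply Rdiv_lt_0_compat; auto. pose proof (Rabs_pos l); lra. }
 intros x Hx. destruct (Req_dec x t) as [->|Hne].
 { rewrite Rminus_diag, Rabs_R0; auto. }
 pose proof (Rabs_pos l).
 assert (Hm1 := Rmin_l d (e / (Rabs l + 1))). assert (Hm2 := Rmin_r d (e / (Rabs l + 1))).
 specialize (Hd2 (x - t) ltac:(intro; apply Hne; lra) ltac:(lra)).
 replace (t + (x - t)) with x in Hd2 by ring.
 set (h := x - t) in *.
 assert (Hh : 0 < Rabs h) by (apply Rabs_pos_lt; unfold h; lra).
 assert (E : f x - f t = h * ((f x - f t)/h - l) + h * l) by (field; unfold h; lra).
 rewrite E. eapply Rle_lt_trans. apply Rabs_triang. rewrite !Rabs_mult.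
 assert (Rabs h * (Rabs l + 1) < e).
 { apply (Rmult_lt_reg_r (/ (Rabs l + 1))). apply Rinv_0_lt_compat; lra.
   rewrite Rmult_assoc, Rinv_r by lra. lra. }
 nra. Qed.

Lemma lemA (f : R -> R) (a b : R) : a <= b ->
  (exists d, 0 < d /\ forall t, a <= t < a + d -> f t < 0) ->
  (forall t, a < t <= b -> ctn f t) ->
  (forall t, a < t <= b -> f t = 0 -> exists l, l < 0 /\ derivable_pt_lim f t l) ->
  forall t, a <= t <= b -> f t < 0.
Proof. intros Hab [d [Hd H0]] Hc Hz.
 destruct (Req_dec a b) as [<-|Hab'].
 { intros t Ht. apply H0. lra. }
 set (E := fun x => a <= x <= b /\ forall t, a <= t <= x -> f t < 0).
 assert (HE : exists x, E x).
 { exists a. split. lra. intros t Ht. apply H0. lra. }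
 assert (HB : bound E). { exists b. intros x [Hx _]. lra. }
 destruct (completeness E HB HE) as [z [Hub Hlub]].
 assert (Hbz : z <= b). { apply Hlub. intros x [Hx _]. lra. }
 set (x0 := Rmin b (a + d/2)).
 assert (Hx0 : E x0).
 { split. unfold x0. split. apply Rmin_glb; lra. apply Rmin_l.
   intros t Ht. apply H0. assert (x0 <= a + d/2) by apply Rmin_r. lra. }
 assert (Haz : a < z).
 { assert (x0 <= z) by (apply Hub; auto). unfold x0 in *.
   assert (a < Rmin b (a + d/2)) by (apply Rmin_glb_lt; lra). lra. }
 assert (P : forall t, a <= t < z -> f t < 0).
 { intros t Ht. destruct (Rlt_le_dec t z) as [Htz|]; [|lra].
   destruct (Classical_Prop.classic (exists x, E x /\ t <= x)) as [[x [[_ Hx] Htx]]|Hn].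
   - apply Hx. lra.
   - exfalso. assert (z <= t). { apply Hlub. intros x Ex. destruct (Rle_dec x t); auto.
       exfalso. apply Hn. exists x. split; auto. lra. } lra. }
 destruct (Rtotal_order (f z) 0) as [Hneg|[Hzero|Hpos]].
 - destruct (Req_dec z b) as [->|Hzb].
   + intros t Ht. destruct (Req_dec t b) as [->|]; auto. apply P. lra.
   + exfalso. destruct (Hc z ltac:(lra) (- f z) ltac:(lra)) as [dl [Hdl Hcz]].
     set (x1 := Rmin b (z + dl/2)).
     assert (Hx1 : E x1).
     { assert (x1 <= z + dl/2) by apply Rmin_r. assert (x1 <= b) by apply Rmin_l.
       assert (z < x1). { unfold x1. apply Rmin_glb_lt; lra. }
       split. lra. intros t Ht. destruct (Rlt_le_dec t z). apply P; lra.
       specialize (Hcz t). assert (Rabs (t - z) < dl) by (rewrite Rabs_right; lra).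
       specialize (Hcz H3). apply Rabs_def2 in Hcz. lra. }
     assert (x1 <= z) by (apply Hub; auto).
     assert (z < x1). { unfold x1. apply Rmin_glb_lt; lra. } lra.
 - exfalso. destruct (Hz z ltac:(lra) Hzero) as [l [Hl Hd']].
   destruct (Hd' (- l / 2) ltac:(lra)) as [[dl Hdl] Hdd].  simpl in Hdd.
   set (h := - Rmin (dl/2) ((z - a)/2)).
   assert (Hh1 : Rmin (dl/2) ((z-a)/2) <= dl/2) by apply Rmin_l.
   assert (Hh2 : Rmin (dl/2) ((z-a)/2) <= (z-a)/2) by apply Rmin_r.
   assert (Hh3 : 0 < Rmin (dl/2) ((z-a)/2)) by (apply Rmin_pos; lra).
   assert (Habs : Rabs h < dl) by (unfold h; rewrite Rabs_Ropp, Rabs_right; lra).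
   specialize (Hdd h ltac:(unfold h; intro; lra) Habs).
   rewrite Hzero in Hdd. apply Rabs_def2 in Hdd.
   assert (Hf : f (z + h) < 0) by (apply P; unfold h; lra).
   assert (Hq : (f (z + h) - 0) / h > 0).
   { unfold Rdiv. replace (f (z+h) - 0) with (f (z+h)) by ring.
     assert (Hhn : h < 0) by (unfold h; lra).
     replace (f (z + h) * / h) with ((- f (z+h)) / (- h)) by (field; lra).
     apply Rdiv_lt_0_compat; lra. }
   lra.
 - exfalso. destruct (Hc z ltac:(lra) (f z) Hpos) as [dl [Hdl Hcz]].
   set (t := Rmax a (z - dl/2)).
   assert (a <= t) by apply Rmax_l. assert (z - dl/2 <= t) by apply Rmax_r.
   assert (t < z). { unfold t. apply Rmax_lub_lt; lra. }
   assert (Ht : Rabs (t - z) < dl) by (rewrite Rabs_left; lra).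
   specialize (Hcz t Ht). apply Rabs_def2 in Hcz.
   assert (f t < 0) by (apply P; lra). lra.
Qed.

Lemma ctn_opp f t : ctn f t -> ctn (fun x => - f x) t.
Proof. intros H e He. destruct (H e He) as [d [Hd H1]]. exists d. split; auto.
 intros x Hx. replace (- f x - - f t) with (- (f x - f t)) by ring.
 rewrite Rabs_Ropp. auto. Qed.

Lemma lemB1 f p q : p <= q -> 0 < f p -> (forall t, p <= t <= q -> ctn f t) ->
  (forall t, p <= t <= q -> f t = 0 -> exists l, 0 < l /\ derivable_pt_lim f t l) ->
  0 < f q.
Proof. intros Hpq Hp Hc Hz.
 assert (- f q < 0); [|lra].
 apply (lemA (fun x => - f x) p q); auto; try lra.
 - destruct (Hc p ltac:(lra) (f p) Hp) as [d [Hd H1]]. exists d. split; auto.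
   intros t Ht. assert (Rabs (t - p) < d) by (rewrite Rabs_right; lra).
   specialize (H1 t H). apply Rabs_def2 in H1. lra.
 - intros t Ht. apply ctn_opp, Hc; lra.
 - intros t Ht Hf. destruct (Hz t ltac:(lra) ltac:(lra)) as [l [Hl Hd]].
   exists (- l). split. lra. apply derivable_pt_lim_opp. auto.
Qed.

Lemma lemB f p q : p < q -> 0 <= f p -> (forall t, p <= t <= q -> ctn f t) ->
  (forall t, p <= t <= q -> f t = 0 -> exists l, 0 < l /\ derivable_pt_lim f t l) ->
  0 < f q.
Proof. intros Hpq Hp Hc Hz.
 destruct (Rle_lt_or_eq_dec 0 (f p) Hp) as [Hp'|Hp'].
 - apply (lemB1 f p q); auto; lra.
 - destruct (Hz p ltac:(lra) (eq_sym Hp')) as [l [Hl Hd]].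
   destruct (Hd (l/2) ltac:(lra)) as [[dl Hdl] Hdd]. simpl in Hdd.
   set (h := Rmin (dl/2) ((q-p)/2)).
   assert (Hh1 : h <= dl/2) by apply Rmin_l.
   assert (Hh2 : h <= (q-p)/2) by apply Rmin_r.
   assert (Hh3 : 0 < h) by (apply Rmin_pos; lra).
   specialize (Hdd h ltac:(intro; lra) ltac:(rewrite Rabs_right; lra)).
   rewrite <- Hp' in Hdd. apply Rabs_def2 in Hdd.
   assert (Hq : 0 < f (p + h)).
   { assert (0 < (f (p + h) - 0) / h) by lra.
     replace (f (p+h)) with (((f (p + h) - 0) / h) * h) by (field; lra).
     apply Rmult_lt_0_compat; lra. }
   apply (lemB1 f (p+h) q); auto; try lra.
   + intros t Ht. apply Hc. lra.
   + intros t Ht. apply Hz. lra.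
Qed.

Lemma ode_Fr Rr w y : 1 < Rr -> 0 < w <= y -> ode_rhs Rr w y = Fr Rr (w / y).
Proof. intros HR Hw. unfold ode_rhs, Fr.
 destruct (Rle_dec (Rabs w) (Rabs y)) as [_|Hn].
 2:{ exfalso; apply Hn; rewrite !Rabs_right; lra. }
 replace (w / (Rr * y)) with (w / y / Rr) by (field; lra). f_equal; ring. Qed.

Section G.
Variables (Rr : R) (g : R -> R) (s : R).
Hypothesis HR : 1 < Rr.
Hypothesis Hg : is_gR Rr g.

Lemma g0 : g 0 = PI / (Rr - 1).
Proof. apply Hg. Qed.

Lemma g0pos : 0 < g 0.
Proof. rewrite g0. apply Rdiv_lt_0_compat. apply PI_RGT_0. lra. Qed.

Lemma gder t : 0 < t -> derivable_pt_lim g t (ode_rhs Rr t (g t)).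
Proof. apply Hg. Qed.

Lemma gctn t : 0 < t -> ctn g t.
Proof. intros. eapply deriv_ctn. apply gder; auto. Qed.

Lemma gright e : 0 < e -> exists d, 0 < d /\ forall t, 0 <= t < d -> Rabs (g t - g 0) < e.
Proof. intros He. destruct Hg as [_ [H _]].
 destruct (H 1 Rlt_0_1) as [dl [Hdl H1]].
 set (c := ode_rhs Rr 0 (g 0)) in *.
 pose proof (Rabs_pos c).
 exists (Rmin dl (e / (Rabs c + 1))). split.
 { apply Rmin_pos; auto. apply Rdiv_lt_0_compat; lra. }
 intros t Ht. assert (Hm1 := Rmin_l dl (e / (Rabs c + 1))).
 assert (Hm2 := Rmin_r dl (e / (Rabs c + 1))).
 destruct (Req_dec t 0) as [->|Hne]. { rewrite Rminus_diag, Rabs_R0; auto. }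
 specialize (H1 t ltac:(lra)).
 assert (E : g t - g 0 = t * ((g t - g 0)/t - c) + t * c) by (field; lra).
 rewrite E. eapply Rle_lt_trans. apply Rabs_triang. rewrite !Rabs_mult.
 rewrite (Rabs_right t) by lra.
 assert (t * (Rabs c + 1) < e).
 { apply (Rmult_lt_reg_r (/ (Rabs c + 1))). apply Rinv_0_lt_compat; lra.
   rewrite Rmult_assoc, Rinv_r by lra. lra. }
 nra. Qed.

Lemma gder_Fr z : 0 < z <= g z -> derivable_pt_lim g z (Fr Rr (z / g z)).
Proof. intros Hz. rewrite <- ode_Fr by (auto; lra). apply gder; lra. Qed.

Lemma Fr_arg z : 0 < z <= g z -> 0 < z / g z <= 1.
Proof. intros Hz. split. apply Rdiv_lt_0_compat; lra.
 apply Rle_div_l; lra. Qed.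

Lemma cross p q : 0 < p < q -> g p <= p -> g q < q.
Proof. intros Hpq Hp.
 assert (0 < (fun x => x - g x) q); [|simpl in *; lra].
 apply (lemB (fun x => x - g x) p q); try lra.
 - intros t Ht. eapply deriv_ctn. apply derivable_pt_lim_minus.
   apply derivable_pt_lim_id. apply gder. lra.
 - intros t Ht Hz. exists (1 - Fr Rr 1). split.
   + pose proof (Fr1_lt1 Rr HR). lra.
   + apply derivable_pt_lim_minus. apply derivable_pt_lim_id.
     assert (Hgt : g t = t) by (simpl in Hz; lra).
     assert (D := gder_Fr t ltac:(lra)). rewrite Hgt in D.
     replace (t / t) with 1 in D by (field; lra). exact D.
Qed.

Hypothesis Hs : 0 < s.
Hypothesis Hgs : g s = s.

Lemma below t : 0 <= t <= s -> t <= g t.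
Proof. intros Ht. destruct (Req_dec t s) as [->|Hne]; [lra|].
 destruct (Req_dec t 0) as [->|Hne0]. pose proof g0pos; lra.
 destruct (Rle_dec t (g t)) as [|Hn]; auto. exfalso.
 assert (g s < s) by (apply (cross t s); lra). lra. Qed.

Lemma lower : g 0 / 2 < s.
Proof.
 assert ((fun t => g 0 / 2 - g t) s < 0); [|simpl in *; lra].
 pose proof g0pos.
 apply (lemA (fun t => g 0 / 2 - g t) 0 s); try lra.
 - destruct (gright (g 0 / 2)) as [d [Hd H1]]. lra. exists d. split; auto.
   intros t Ht. specialize (H1 t ltac:(lra)). apply Rabs_def2 in H1. lra.
 - intros t Ht. eapply deriv_ctn. apply derivable_pt_lim_minus. apply derivable_pt_lim_const. apply gder. lra.
 - intros t Ht Hz. exists (- Fr Rr (t / g t)).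
   assert (Hb := below t ltac:(lra)).
   split. pose proof (Fr_pos Rr (t / g t) HR (Fr_arg t ltac:(lra))). lra.
   replace (- Fr Rr (t / g t)) with (0 - Fr Rr (t / g t)) by ring.
   apply derivable_pt_lim_minus. apply derivable_pt_lim_const. apply gder_Fr. lra.
Qed.

Lemma upper eta : 8 <= Rr -> 0 < eta -> s < 2 * (g 0 + eta).
Proof. intros H8 He.
 assert ((fun t => g t - g 0 - 4 / Rr * t - eta) s < 0); [|simpl in *].
 2:{ assert (4 / Rr <= 1/2). { apply Rle_div_l; lra. } nra. }
 apply (lemA (fun t => g t - g 0 - 4 / Rr * t - eta) 0 s); try lra.
 - destruct (gright eta He) as [d [Hd H1]].
   assert (0 < 4 / Rr) by (apply Rdiv_lt_0_compat; lra).
   exists d. split; auto.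
   intros t Ht. specialize (H1 t ltac:(lra)). apply Rabs_def2 in H1. nra.
 - intros t Ht. eapply deriv_ctn.
   apply derivable_pt_lim_minus. apply derivable_pt_lim_minus. apply derivable_pt_lim_minus.
   apply gder. lra. apply derivable_pt_lim_const.
   apply derivable_pt_lim_scal. apply derivable_pt_lim_id. apply derivable_pt_lim_const.
 - intros t Ht Hz. assert (Hb := below t ltac:(lra)).
   exists (Fr Rr (t / g t) - 0 - 4 / Rr * 1 - 0). split.
   + pose proof (Fr_le Rr (t / g t) HR (Fr_arg t ltac:(lra))).
     assert (3 / Rr < 4 / Rr). { unfold Rdiv. apply Rmult_lt_compat_r.
       apply Rinv_0_lt_compat; lra. lra. } lra.
   + apply derivable_pt_lim_minus. apply derivable_pt_lim_minus. apply derivable_pt_lim_minus.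
     apply gder_Fr. lra. apply derivable_pt_lim_const.
     apply derivable_pt_lim_scal. apply derivable_pt_lim_id. apply derivable_pt_lim_const.
Qed.

End G.

Lemma mono a b g1 g2 s1 s2 : 1 < a -> a < b -> is_gR a g1 -> is_gR b g2 ->
  0 < s1 -> g1 s1 = s1 -> 0 < s2 -> g2 s2 = s2 -> s2 < s1.
Proof. intros Ha Hab H1 H2 Hs1 Hg1 Hs2 Hg2.
 assert (Hc : (fun t => g2 t - g1 t) s2 < 0).
 { apply (lemA (fun t => g2 t - g1 t) 0 s2); try lra.
   - assert (E : g2 0 - g1 0 < 0).
     { rewrite (g0 a g1), (g0 b g2); auto. unfold Rdiv.
       assert (/ (b - 1) < / (a - 1)) by (apply Rinv_lt_contravar; nra).
       pose proof PI_RGT_0. nra. }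
     set (e := - (g2 0 - g1 0) / 2).
     destruct (gright a g1 H1 e) as [d1 [Hd1 D1]]. unfold e; lra.
     destruct (gright b g2 H2 e) as [d2 [Hd2 D2]]. unfold e; lra.
     exists (Rmin d1 d2). split. apply Rmin_pos; auto.
     intros t Ht. assert (Rmin d1 d2 <= d1) by apply Rmin_l. assert (Rmin d1 d2 <= d2) by apply Rmin_r.
     specialize (D1 t ltac:(lra)). specialize (D2 t ltac:(lra)).
     apply Rabs_def2 in D1. apply Rabs_def2 in D2. unfold e in *. lra.
   - intros t Ht. eapply deriv_ctn. apply derivable_pt_lim_minus; [apply (gder b)|apply (gder a)]; auto; lra.
   - intros t Ht Hz. simpl in Hz.
     assert (Hb := below b g2 s2 ltac:(lra) H2 Hs2 Hg2 t ltac:(lra)).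
     exists (Fr b (t / g2 t) - Fr a (t / g1 t)). split.
     + replace (g1 t) with (g2 t) by lra.
       apply Rlt_minus. apply Fr_decr; auto. apply Fr_arg; lra.
     + apply derivable_pt_lim_minus; apply gder_Fr; auto; lra. }
 simpl in Hc.
 destruct (Rtotal_order s2 s1) as [|[E|E]]; auto; exfalso.
 - subst. lra.
 - assert (g1 s2 < s2) by (apply (cross a g1 Ha H1 s1 s2); lra). lra.
Qed.

Theorem proposition3p2 (s : R -> R)
  (Hs : forall Rr, 1 < Rr ->
     exists g, is_gR Rr g /\ 0 < s Rr /\ g (s Rr) = s Rr) :
  (forall a b, 1 < a -> a < b -> s b < s a) /\
  (forall M, exists d, 0 < d /\ forall Rr, 1 < Rr < 1 + d -> M < s Rr) /\
  (forall eps, 0 < eps -> exists N, forall Rr, N < Rr -> 1 < Rr -> Rabs (s Rr) < eps).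
Proof. split; [|split].
 - intros a b Ha Hab. destruct (Hs a Ha) as [g1 [H1 [P1 Q1]]].
   destruct (Hs b ltac:(lra)) as [g2 [H2 [P2 Q2]]].
   eapply mono; eauto.
 - intros M. pose proof PI_RGT_0. pose proof (Rabs_pos M).
   exists (PI / (2 * (Rabs M + 1))). split. apply Rdiv_lt_0_compat; lra.
   intros Rr HR. destruct (Hs Rr ltac:(lra)) as [g [H1 [P1 Q1]]].
   assert (L := lower Rr g (s Rr) ltac:(lra) H1 P1 Q1).
   rewrite (g0 Rr g) in L by auto.
   assert (HM : M <= Rabs M) by apply Rle_abs.
   assert (H3 : Rr - 1 < PI / (2 * (Rabs M + 1))) by lra.
   assert (H4 : (Rr - 1) * (2 * (Rabs M + 1)) < PI).
   { apply (Rmult_lt_compat_r (2 * (Rabs M + 1))) in H3; [|lra].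
     replace (PI / (2 * (Rabs M + 1)) * (2 * (Rabs M + 1))) with PI in H3 by (field; lra). exact H3. }
   assert (Rabs M + 1 < PI / (Rr - 1) / 2).
   { replace (PI / (Rr - 1) / 2) with (PI * / (2 * (Rr - 1))) by (field; lra).
     apply (Rmult_lt_reg_r (2 * (Rr - 1))). lra.
     rewrite Rmult_assoc, Rinv_l by lra. lra. }
   lra.
 - intros eps He. exists (Rmax 8 (1 + 16 / eps)). intros Rr HN HR.
   assert (H8 : 8 <= Rr) by (pose proof (Rmax_l 8 (1 + 16/eps)); lra).
   assert (H16 : 1 + 16 / eps < Rr) by (pose proof (Rmax_r 8 (1 + 16/eps)); lra).
   destruct (Hs Rr HR) as [g [H1 [P1 Q1]]].
   assert (U := upper Rr g (s Rr) HR H1 P1 Q1 (eps/4) H8 ltac:(lra)).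
   rewrite (g0 Rr g) in U by auto.
   assert (PI / (Rr - 1) < eps / 4).
   { pose proof PI_4. apply Rlt_div_l. lra.
     assert (H0 : 16 / eps < Rr - 1) by lra.
     assert (16 < (Rr - 1) * eps). { apply Rlt_div_l in H0; auto. }
     lra. }
   rewrite Rabs_right; lra.
Qed.
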